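(* There exist quantum predictions in the two-superobserver, two-friend extended Wigner's friend scenario that are incompatible with Possibilistic Local Friendliness. Precisely, there exist the following data: - a state $|\Psi\rangle$ on $\mathcal H_A\otimes\mathcal H_B$, where $\mathcal H_A$ (Charlie's laboratory, including his system) contains orthonormal record states $|C_0\rangle,|C_1\rangle$ and $\mathcal H_B$ (Debbie's laboratory) contains orthonormal record states $|D_0\rangle,|D_1\rangle$; - projective measurements $\{A_x(a)\}_{a\in\{0,1\}}$ on $\mathcal H_A$ and $\{B_y(b)\}_{b\in\{0,1\}}$ on $\mathcal H_B$, where $x,y\in\{1,2\}$, and where $A_1$ and $B_1$ are the record-readout measurements ($A_1(0)=|C_0\rangle\langle C_0|$, $A_1(1)=I-|C_0\rangle\langle C_0|$, and similarly for $B_1$ with $|D_0\rangle$). For these data, the possibility set $S=\{(a,b,x,y): \langle\Psi|A_x(a)\otimes B_y(b)|\Psi\rangle>0\}$ admits no Possibilistic Local Friendliness model reproducing it.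
   Context: Scenario. Two space-like separated superobservers, Alice and Bob, have friends Charlie and Debbie respectively. Each friend measures a system inside a sealed laboratory. - Charlie and Debbie record outcomes $C=c\in\{0,1\}$ and $D=d\in\{0,1\}$. - Alice chooses $X=x\in\{1,2\}$ and observes $A=a\in\{0,1\}$. Bob chooses $Y=y\in\{1,2\}$ and observes $B=b\in\{0,1\}$. - Setting $X=1$ means Alice asks Charlie for his result and sets $A=C$. Setting $Y=1$ means Bob asks Debbie and sets $B=D$. - Spacetime relations: $X$ is not in the past light cone of any of $B,Y,C,D$, and $Y$ is not in the past light cone of any of $A,X,C,D$. Possibilistic Local Friendliness (PLF) model for a possibility set $S\subseteq\{0,1\}^2\times\{1,2\}^2$. This is a set $T\subseteq\{0,1\}^4\times\{1,2\}^2$ of possible joint assignments $(a,b,c,d,x,y)$. By Absoluteness of Observed Events, every observed variable, including $C$ and $D$, has a definite value in every run. $T$ must satisfy the following. - Every $t\in T$ with $x=1$ has $a=c$, and every $t\in T$ with $y=1$ has $b=d$. - Possibilistic Local Agency: call a partial assignment $E$ possible if it agrees with some element of $T$. If $E$ is possible, then for any intervention $Z\in\{X,Y\}$ not in the past light cone of any variable assigned in $E$, and for every value $z$, the assignment $E$ together with $Z=z$ is possible. - The projection of $T$ onto $(a,b,x,y)$ equals $S$. *)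

(* Defs.v *)
(* algebraic complex numbers algC, finite-dimensional Hilbert spaces
   represented by column vectors 'cV[algC]_d, tensor product by mxtens' tensmx. *)
From mathcomp Require Import all_boot all_order all_algebra.
From mathcomp Require Import algC.
From mathcomp Require Import mxtens.
Set Implicit Arguments. Unset Strict Implicit. Unset Printing Implicit Defensive.
Import GRing.Theory Num.Theory.
Local Open Scope ring_scope.

(* outcomes a,b,c,d in {0,1} are encoded as bool: false = 0, true = 1 *)
Definition outcome := bool.
Inductive setting := s1 | s2.

Record run := Run { ra : outcome; rb : outcome; rc : outcome; rd : outcome;
                    rx : setting; ry : setting }.

Definition possset := outcome -> outcome -> setting -> setting -> Prop.

Record passign := PA { pa : option outcome; pb : option outcome;
                       pc : option outcome; pd : option outcome;
                       px : option setting; py : option setting }.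

Definition agree_opt {V : Type} (o : option V) (v : V) : Prop :=
  match o with Some w => v = w | None => True end.

Definition agrees (E : passign) (t : run) : Prop :=
  [/\ agree_opt (pa E) (ra t), agree_opt (pb E) (rb t), agree_opt (pc E) (rc t),
      agree_opt (pd E) (rd t) & agree_opt (px E) (rx t) /\ agree_opt (py E) (ry t)].

Definition possible (T : run -> Prop) (E : passign) : Prop :=
  exists t, T t /\ agrees E t.

Definition withX (E : passign) (z : setting) : passign :=
  PA (pa E) (pb E) (pc E) (pd E) (Some z) (py E).
Definition withY (E : passign) (z : setting) : passign :=
  PA (pa E) (pb E) (pc E) (pd E) (px E) (Some z).

(* Possibilistic Local Agency with the given spacetime relations:
   X is (only) known not to be in the past light cone of B,Y,C,D, so X may be
   intervened on when E assigns only variables among B,Y,C,D;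
   Y is (only) known not to be in the past light cone of A,X,C,D. *)
Definition plocal_agency (T : run -> Prop) : Prop :=
  forall E : passign, possible T E ->
    (pa E = None -> px E = None -> forall z, possible T (withX E z)) /\
    (pb E = None -> py E = None -> forall z, possible T (withY E z)).

Definition PLF_model (S : possset) (T : run -> Prop) : Prop :=
  [/\ (forall t, T t -> rx t = s1 -> ra t = rc t),
      (forall t, T t -> ry t = s1 -> rb t = rd t),
      plocal_agency T &
      (forall a b x y, S a b x y <-> exists c d, T (Run a b c d x y))].

Definition admits_PLF_model (S : possset) : Prop := exists T, PLF_model S T.

Definition adjmx {m n : nat} (M : 'M[algC]_(m, n)) : 'M[algC]_(n, m) :=
  (map_mx (@Num.conj_op _) M)^T.

Definition braket {n : nat} (u v : 'cV[algC]_n) : algC := (adjmx u *m v) 0 0.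
Definition expval {n : nat} (M : 'M[algC]_n) (v : 'cV[algC]_n) : algC :=
  (adjmx v *m M *m v) 0 0.

Definition unit_vector {n : nat} (v : 'cV[algC]_n) : Prop := braket v v = 1.

Definition projective_meas {n : nat} (P : outcome -> 'M[algC]_n) : Prop :=
  [/\ forall o, adjmx (P o) = P o,
      forall o, P o *m P o = P o &
      P false + P true = 1%:M].

Definition ketbra {n : nat} (v : 'cV[algC]_n) : 'M[algC]_n := v *m adjmx v.

Definition quantum_possset {dA dB : nat} (Psi : 'cV[algC]_(dA * dB))
  (A : setting -> outcome -> 'M[algC]_dA) (B : setting -> outcome -> 'M[algC]_dB)
  : possset :=
  fun a b x y => 0 < expval (tensmx (A x a) (B y b)) Psi.

(* Main.v *)
Require Import Defs.
From mathcomp Require Import all_boot all_order all_algebra.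
From mathcomp Require Import algC.
From mathcomp Require Import mxtens.
From mathcomp Require Import ring.
Import GRing.Theory Num.Theory.
Local Open Scope ring_scope.

Definition mk2 (a b c d : algC) : 'M[algC]_2 :=
  \matrix_(i < 2, j < 2) if (i : nat) == 0%N then (if (j : nat) == 0%N then a else b)
                         else (if (j : nat) == 0%N then c else d).

Lemma ord2P (P : 'I_2 -> Prop) : P ord0 -> P ord_max -> forall i, P i.
Proof.
move=> H0 H1 [[|[|i]] Hi] //.
- by rewrite (_ : Ordinal Hi = ord0) //; apply: val_inj.
- by rewrite (_ : Ordinal Hi = ord_max) //; apply: val_inj.
Qed.

Lemma sum2 (F : 'I_2 -> algC) : \sum_(i < 2) F i = F ord0 + F ord_max.
Proof. by rewrite big_ord_recl big_ord1; congr (_ + F _); apply: val_inj. Qed.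

Lemma mk2_mul a b c d a' b' c' d' :
  mk2 a b c d *m mk2 a' b' c' d' = mk2 (a*a' + b*c') (a*b'+b*d') (c*a'+d*c') (c*b'+d*d').
Proof. apply/matrixP; apply: ord2P; apply: ord2P; by rewrite !mxE sum2 !mxE. Qed.

Lemma mk2_add a b c d a' b' c' d' :
  mk2 a b c d + mk2 a' b' c' d' = mk2 (a+a') (b+b') (c+c') (d+d').
Proof. apply/matrixP; apply: ord2P; apply: ord2P; by rewrite !mxE. Qed.

Lemma mk2_1 : 1%:M = mk2 1 0 0 1 :> 'M[algC]_2.
Proof. apply/matrixP; apply: ord2P; apply: ord2P; by rewrite !mxE. Qed.

Lemma mk2_adj a b c d : adjmx (mk2 a b c d) = mk2 a^* c^* b^* d^*.
Proof. apply/matrixP; apply: ord2P; apply: ord2P; by rewrite !mxE. Qed.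

Lemma sum_tens m n (F : 'I_(m*n) -> algC) :
  \sum_k F k = \sum_(i < m) \sum_(j < n) F (@mxtens_index m n (i, j)).
Proof.
have bij : bijective (@mxtens_index m n).
  by exists (@mxtens_unindex m n); [exact: mxtens_indexK | exact: mxtens_unindexK].
rewrite (reindex _ (onW_bij _ bij)) /= pair_bigA /=.
by apply: eq_bigr => -[i j].
Qed.

Definition colT {m n} (W : 'M[algC]_(m, n)) : 'cV[algC]_(m * n) :=
  \col_k W (@mxtens_unindex m n k).1 (@mxtens_unindex m n k).2.

Lemma colT_index m n (W : 'M[algC]_(m, n)) i j :
  (colT W) (@mxtens_index m n (i, j)) 0 = W i j.
Proof.
rewrite /colT mxE; have := mxtens_indexK (i, j).
by rewrite /mxtens_unindex => -[-> ->].
Qed.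

Lemma adj_colT_index m n (W : 'M[algC]_(m, n)) i j :
  (adjmx (colT W)) 0 (@mxtens_index m n (i, j)) = (W i j)^*.
Proof. by rewrite /adjmx mxE mxE colT_index. Qed.

Lemma expvalE m n (P : 'M[algC]_m) (Q : 'M[algC]_n) (W : 'M[algC]_(m, n)) :
  expval (tensmx P Q) (colT W) =
  \sum_(k < m) \sum_(l < n) \sum_(i < m) \sum_(j < n)
     (W i j)^* * (P i k * Q j l) * W k l.
Proof.
rewrite /expval mxE sum_tens.
apply: eq_bigr => k _; apply: eq_bigr => l _.
rewrite colT_index mxE big_distrl /= sum_tens.
apply: eq_bigr => i _; apply: eq_bigr => j _.
by rewrite adj_colT_index tensmxE.
Qed.

Lemma braketE m n (W : 'M[algC]_(m, n)) :
  braket (colT W) (colT W) = \sum_(i < m) \sum_(j < n) (W i j)^* * W i j.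
Proof.
rewrite /braket mxE sum_tens.
apply: eq_bigr => i _; apply: eq_bigr => j _.
by rewrite adj_colT_index colT_index.
Qed.

Ltac conjq := rewrite ?(rmorphN, rmorphM, fmorphV, rmorph_nat, rmorph0, rmorph1, rmorphD, rmorphB).

Definition W0 : 'M[algC]_2 := mk2 0 (-(2/3)) (-(2/3)) (1/3).
Definition Psi0 : 'cV[algC]_(2 * 2) := colT W0.
Definition Pu : 'M[algC]_2 := mk2 (1/5) (2/5) (2/5) (4/5).
Definition Pv : 'M[algC]_2 := mk2 (4/5) (-(2/5)) (-(2/5)) (1/5).
Definition K0 : 'M[algC]_2 := mk2 1 0 0 0.
Definition K1 : 'M[algC]_2 := mk2 0 0 0 1.

Ltac ev := rewrite ?expvalE ?braketE !sum2 /W0 /Pu /Pv /K0 /K1 /mk2 !mxE /=; conjq.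

Lemma unitPsi : unit_vector Psi0.
Proof. rewrite /unit_vector /Psi0; ev. by field. Qed.

Lemma F1 : 0 < expval (tensmx Pu Pu) Psi0.
Proof.
have -> : expval (tensmx Pu Pu) Psi0 = 16%:R / 225%:R.
  by rewrite /Psi0; ev; field.
by rewrite divr_gt0 // ltr0n.
Qed.
Lemma F2 : expval (tensmx Pu K1) Psi0 = 0.
Proof. rewrite /Psi0; ev; by field. Qed.
Lemma F3 : expval (tensmx K1 Pu) Psi0 = 0.
Proof. rewrite /Psi0; ev; by field. Qed.
Lemma F4 : expval (tensmx K0 K0) Psi0 = 0.
Proof. rewrite /Psi0; ev; by field. Qed.

Definition C0 : 'cV[algC]_2 := \col_(i < 2) if (i : nat) == 0%N then 1 else 0.
Definition C1 : 'cV[algC]_2 := \col_(i < 2) if (i : nat) == 0%N then 0 else 1.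

Lemma ketC0 : ketbra C0 = K0.
Proof.
apply/matrixP; apply: ord2P; apply: ord2P;
  by rewrite /ketbra /adjmx /K0 /mk2 !mxE big_ord1 !mxE /=; conjq; rewrite ?mulr1 ?mulr0.
Qed.

Lemma oneK0 : 1%:M - K0 = K1.
Proof. by rewrite mk2_1 /K0 /K1; apply/matrixP; apply: ord2P; apply: ord2P; rewrite !mxE /= ?subrr ?subr0. Qed.

Lemma orthoC : [/\ braket C0 C0 = 1, braket C1 C1 = 1 & braket C0 C1 = 0].
Proof.
by split; rewrite /braket /adjmx !mxE sum2 !mxE /=; conjq; rewrite ?mulr0 ?mul0r ?mulr1 ?addr0 ?add0r.
Qed.

Ltac pm := split; [case; rewrite mk2_adj; conjq; done
                  | case; rewrite mk2_mul; congr mk2; by field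
                  | rewrite mk2_add mk2_1; congr mk2; by field].

Definition Am (x : setting) (o : outcome) : 'M[algC]_2 :=
  match x, o with
  | s1, false => ketbra C0
  | s1, true => 1%:M - ketbra C0
  | s2, false => Pu
  | s2, true => Pv
  end.

Lemma Am_proj x : projective_meas (Am x).
Proof.
case: x; rewrite /projective_meas /Am ?ketC0 ?oneK0 /K0 /K1 /Pu /Pv.
all: pm.
Qed.

Lemma noPLF : ~ admits_PLF_model (quantum_possset Psi0 Am Am).
Proof.
move=> [T [H1 H2 HLA HS]].
have nS : forall a b x y, expval (tensmx (Am x a) (Am y b)) Psi0 = 0 ->
    ~ exists c d, T (Run a b c d x y).
  by move=> a b x y E /HS; rewrite /quantum_possset E Order.POrderTheory.ltxx.
have [c [d Ht]] : exists c d, T (Run false false c d s2 s2).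
  by apply/HS; rewrite /quantum_possset /=; exact: F1.
have Hd : d = false.
  have P1 : possible T (PA (Some false) None (Some c) (Some d) (Some s2) None).
    by exists (Run false false c d s2 s2); split => //=.
  have [_ /(_ erefl erefl s1) [[a' b' c' d' x' y'] [Tt Ag]]] := HLA _ P1.
  move: Tt; case: Ag => /= -> _ -> -> [-> ->] Tt'.
  have /= Eb := H2 _ Tt' erefl; rewrite {}Eb in Tt'.
  case: d Ht P1 Tt' => // _ _ Tt'; exfalso; apply: (nS false true s2 s1).
    by rewrite /= ketC0 oneK0; exact: F2.
  by exists c, true.
subst d.
have Hc : c = false.
  have P2 : possible T (PA None (Some false) (Some c) (Some false) None (Some s2)).
    by exists (Run false false c false s2 s2); split => //=.
  have [/(_ erefl erefl s1) [[a' b' c' d' x' y'] [Tt Ag]] _] := HLA _ P2.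
  move: Tt; case: Ag => /= _ -> -> -> [-> ->] Tt'.
  have /= Ea := H1 _ Tt' erefl; rewrite {}Ea in Tt'.
  case: c Ht P2 Tt' => // _ _ Tt'; exfalso; apply: (nS true false s1 s2).
    by rewrite /= ketC0 oneK0; exact: F3.
  by exists true, false.
subst c.
have P3 : possible T (PA None None (Some false) (Some false) None None).
  by exists (Run false false false false s2 s2); split => //=.
have [/(_ erefl erefl s1) P4 _] := HLA _ P3.
have [_ /(_ erefl erefl s1) [[a' b' c' d' x' y'] [Tt Ag]]] := HLA _ P4.
move: Tt; case: Ag => /= _ _ -> -> [-> ->] Tt'.
have /= Ea := H1 _ Tt' erefl; have /= Eb := H2 _ Tt' erefl.
rewrite {}Ea {}Eb in Tt'.
apply: (nS false false s1 s1).
  by rewrite /= ketC0; exact: F4.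
by exists false, false.
Qed.

Theorem theorem5 :
  exists (dA dB : nat) (Psi : 'cV[algC]_(dA * dB))
         (C0 C1 : 'cV[algC]_dA) (D0 D1 : 'cV[algC]_dB)
         (A : setting -> outcome -> 'M[algC]_dA)
         (B : setting -> outcome -> 'M[algC]_dB),
    [/\ unit_vector Psi,
        (* orthonormal record states of Charlie and Debbie *)
        [/\ braket C0 C0 = 1, braket C1 C1 = 1 & braket C0 C1 = 0] /\
        [/\ braket D0 D0 = 1, braket D1 D1 = 1 & braket D0 D1 = 0],
        (* projective measurements *)
        (forall x, projective_meas (A x)) /\ (forall y, projective_meas (B y)),
        (* A_1 and B_1 read out the records *)
        [/\ A s1 false = ketbra C0, A s1 true = 1%:M - ketbra C0,
            B s1 false = ketbra D0 & B s1 true = 1%:M - ketbra D0] &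
        ~ admits_PLF_model (quantum_possset Psi A B)].
Proof.
exists 2%N, 2%N, Psi0, C0, C1, C0, C1, Am, Am.
split.
- exact: unitPsi.
- by split; exact: orthoC.
- by split; exact: Am_proj.
- by split.
- exact: noPLF.
Qed.
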